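(* Let $\mathcal{P}$ be a topological property that is clopen hereditary (i.e., every subspace that is both open and closed in a space with $\mathcal{P}$ has $\mathcal{P}$). If a topological space $X$ is dense-$\mathcal{P}$, then every open subspace of $X$ is dense-$\mathcal{P}$.
   Context: For a topological property $\mathcal{P}$, a space $X$ is called dense-$\mathcal{P}$ if every dense subset of $X$ (with the subspace topology) has $\mathcal{P}$. No separation axioms are assumed. *)

(* Defs.v *)
(* general topological spaces (no separation axioms), given by
   their family of open sets, with the subspace topology on sigma types. *)
From Stdlib Require Import Classical.

Record space := Space {
  pt : Type;
  op : (pt -> Prop) -> Prop;
  op_full : op (fun _ => True);
  op_inter : forall U V, op U -> op V -> op (fun x => U x /\ V x);
  op_union : forall F : (pt -> Prop) -> Prop,
      (forall U, F U -> op U) -> op (fun x => exists U, F U /\ U x)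
}.

Arguments op {s} _.

Definition sub_op (X : space) (A : pt X -> Prop) (V : {x : pt X | A x} -> Prop) : Prop :=
  exists U : pt X -> Prop, op U /\ forall x : {x : pt X | A x}, V x <-> U (proj1_sig x).

Lemma sub_op_full X A : sub_op X A (fun _ => True).
Proof. exists (fun _ => True); split; [apply op_full | tauto]. Qed.

Lemma sub_op_inter X A U V : sub_op X A U -> sub_op X A V ->
  sub_op X A (fun x => U x /\ V x).
Proof.
  intros [U' [HU EU]] [V' [HV EV]]; exists (fun x => U' x /\ V' x); split.
  - apply op_inter; assumption.
  - intros x; rewrite EU, EV; tauto.
Qed.

Lemma sub_op_union X A (F : ({x : pt X | A x} -> Prop) -> Prop) :
  (forall U, F U -> sub_op X A U) -> sub_op X A (fun x => exists U, F U /\ U x).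
Proof.
  intros HF.
  exists (fun y => exists W, (op W /\ exists V, F V /\ forall x, V x <-> W (proj1_sig x)) /\ W y).
  split.
  - apply (op_union X (fun W => op W /\ exists V, F V /\ forall x, V x <-> W (proj1_sig x))).
    intros W [HW _]; exact HW.
  - intros x; split.
    + intros [V [FV Vx]]. destruct (HF V FV) as [W [HW EW]].
      exists W; split; [split; [exact HW | exists V; auto] | apply EW; exact Vx].
    + intros [W [[HW [V [FV EV]]] Wx]]. exists V; split; [exact FV | apply EV; exact Wx].
Qed.

Definition sub (X : space) (A : pt X -> Prop) : space :=
  Space {x : pt X | A x} (sub_op X A) (sub_op_full X A) (sub_op_inter X A)
        (sub_op_union X A).

Definition continuous (X Y : space) (f : pt X -> pt Y) : Prop :=
  forall V : pt Y -> Prop, op V -> op (fun x => V (f x)).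

Definition homeomorphic (X Y : space) : Prop :=
  exists (f : pt X -> pt Y) (g : pt Y -> pt X),
    (forall x, g (f x) = x) /\ (forall y, f (g y) = y) /\
    continuous X Y f /\ continuous Y X g.

Definition topological_property (P : space -> Prop) : Prop :=
  forall X Y : space, homeomorphic X Y -> P X -> P Y.

Definition closed (X : space) (A : pt X -> Prop) : Prop := op (fun x => ~ A x).
Definition clopen (X : space) (A : pt X -> Prop) : Prop := op A /\ closed X A.

Definition clopen_hereditary (P : space -> Prop) : Prop :=
  forall X : space, P X -> forall A : pt X -> Prop, clopen X A -> P (sub X A).

Definition dense (X : space) (D : pt X -> Prop) : Prop :=
  forall U : pt X -> Prop, op U -> (exists x, U x) -> exists x, U x /\ D x.

Definition dense_P (P : space -> Prop) (X : space) : Prop :=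
  forall D : pt X -> Prop, dense X D -> P (sub X D).

(* Main.v *)
Require Import Defs.
From Stdlib Require Import Classical ProofIrrelevance FunctionalExtensionality PropExtensionality.

Lemma op2_iff (X : space) (A : pt X -> Prop) (B : pt (sub X A) -> Prop)
  (V : pt (sub (sub X A) B) -> Prop) :
  op V <-> exists O : pt X -> Prop, op O /\ forall y, V y <-> O (proj1_sig (proj1_sig y)).
Proof.
  split.
  - intros [W [[O [HO EO]] EW]]. exists O; split; [exact HO|].
    intros y; rewrite EW, EO; tauto.
  - intros [O [HO EO]]. exists (fun x : pt (sub X A) => O (proj1_sig x)). split.
    + exists O; split; [exact HO| tauto].
    + exact EO.
Qed.

Theorem mainTheorem2 (P : space -> Prop)
  (HP : topological_property P) (Hch : clopen_hereditary P)
  (X : space) (HX : dense_P P X)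
  (U : pt X -> Prop) (HU : op U) :
  dense_P P (sub X U).
Proof.
  intros D HD.
  set (ext := fun x => exists W : pt X -> Prop, op W /\ W x /\ forall y, W y -> ~ U y).
  assert (Hext : op ext).
  { unfold ext.
    pose proof (op_union X (fun W => op W /\ forall y, W y -> ~ U y)) as H.
    assert (H' : op (fun x => exists W, (op W /\ forall y, W y -> ~ U y) /\ W x))
      by (apply H; tauto).
    assert (E : (fun x => exists W, (op W /\ forall y, W y -> ~ U y) /\ W x) = ext).
    { apply functional_extensionality; intro x; apply propositional_extensionality.
      unfold ext; split.
      - intros [W [[a b] c]]; exists W; auto.
      - intros [W [a [b c]]]; exists W; auto. }
    rewrite E in H'; exact H'. }
  set (E := fun x => (exists h : U x, D (exist _ x h)) \/ ext x).
  assert (HE : dense X E).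
  { intros W HW [w Hw].
    destruct (classic (exists x, W x /\ U x)) as [[x [Wx Ux]]|Hn].
    - assert (H1 : op (s:=sub X U) (fun u : pt (sub X U) => W (proj1_sig u)))
        by (exists W; split; [exact HW| tauto]).
      assert (H2 : exists u : pt (sub X U), W (proj1_sig u)) by (exists (exist _ x Ux); exact Wx).
      destruct (HD _ H1 H2) as [[y hy] [Wy Dy]].
      exists y; split; [exact Wy|]. left; exists hy; exact Dy.
    - exists w; split; [exact Hw|]. right. exists W; split; [exact HW|split; [exact Hw|]].
      intros y Wy Uy; apply Hn; eauto. }
  set (A := fun e : pt (sub X E) => U (proj1_sig e)).
  assert (HA : clopen (sub X E) A).
  { split.
    - exists U; split; [exact HU| unfold A; tauto].
    - exists ext; split; [exact Hext|]. intros [x Ex]; simpl; unfold A; simpl.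
      split.
      + intros nU. destruct Ex as [[h _]|He]; [contradiction|exact He].
      + intros [W [_ [Wx HW]]]. exact (HW x Wx). }
  pose proof (Hch _ (HX E HE) A HA) as HPA.
  apply (HP (sub (sub X E) A) (sub (sub X U) D)); [|exact HPA].
  assert (toD : forall x (hU : U x), E x -> D (exist _ x hU)).
  { intros x hU [[h Dh]|[W [_ [Wx HW]]]].
    - rewrite (proof_irrelevance _ hU h); exact Dh.
    - exfalso; exact (HW x Wx hU). }
  unshelve eexists.
  { intros [[x Ex] hU]. exact (exist _ (exist _ x hU) (toD x hU Ex)). }
  unshelve eexists.
  { intros [[x hU] Dx]. exact (exist _ (exist _ x (or_introl (ex_intro _ hU Dx))) hU). }
  split; [|split; [|split]].
  - intros [[x Ex] hU]. simpl.
    assert (Hp : or_introl (ex_intro (fun h : U x => D (exist (fun x0 : pt X => U x0) x h)) hU (toD x hU Ex)) = Ex) by apply proof_irrelevance.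
    rewrite Hp. reflexivity.
  - intros [[x hU] Dx]. simpl. f_equal. apply proof_irrelevance.
  - intros V HV. apply op2_iff in HV. destruct HV as [O [HO EO]].
    apply op2_iff. exists O; split; [exact HO|].
    intros [[x Ex] hU]. simpl. rewrite EO. simpl. tauto.
  - intros V HV. apply op2_iff in HV. destruct HV as [O [HO EO]].
    apply op2_iff. exists O; split; [exact HO|].
    intros [[x hU] Dx]. simpl. rewrite EO. simpl. tauto.
Qed.
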